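(* Let $X\subseteq\mathbb{R}^m$, $f:X\to\mathbb{R}^d$ with $a_{i0}\le f_i(x)\le a_{in}$ on $X$, and $\phi:\mathbb{R}^d\to\mathbb{R}$ multilinear, $\phi(s_{1n},\dots,s_{dn})=\sum_{I\in\mathcal{I}}c_I\prod_{i\in I}s_{in}$ with $\mathcal{I}$ a collection of subsets of $[d]$ and $c_I\in\mathbb{R}$. Let $u:X\to\mathbb{R}^{d\times(n+1)}$ be convex with $u_{i0}(x)=a_{i0}$, $u_{in}(x)=f_i(x)$, $u_{ij}(x)\le\min\{f_i(x),a_{ij}\}$ ($j\in[n-1]$), and $W$ a convex set containing $\{(x,f(x))\mid x\in X\}$. Then, identifying $f$ with $s_{\cdot n}=(s_{1n},\dots,s_{dn})$, the set $\{(\mu,w,s,\delta)\mid(\mu,w,s)\text{ satisfies (HQ)},\ (Z(s),\delta)\text{ satisfies (Inc-1)}\}$ is an ideal formulation of $\bigcup_{H\in\mathcal{H}}\operatorname{conv}\bigl(\{(f,\phi(f))\mid f\in H\}\bigr)$, and adding $u(x)\le s$ and $(x,s_{\cdot n})\in W$ yields an MICP relaxation of the graph of $\phi\circ f$.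
   Context: $d,n\ge1$, $[k]=\{1,\dots,k\}$, $E=\{0,\dots,n\}^d$; $a\in\mathbb{R}^{d\times(n+1)}$ with $a_{i0}<\dots<a_{in}$; integers $0=\tau(i,0)<\dots<\tau(i,l_i)=n$; $\mathcal{H}=\{\prod_i[a_{i\tau(i,t_i-1)},a_{i\tau(i,t_i)}]\mid t_i\in[l_i]\}$. $\Delta_i=\{z_i\in\mathbb{R}^{n+1}\mid1=z_{i0}\ge\dots\ge z_{in}\ge0\}$. (Inc-1): $z_i\in\Delta_i$, $\delta_{it}\in\{0,1\}$, $z_{i\tau(i,t)}\ge\delta_{it}\ge z_{i\tau(i,t)+1}$. $Z(s)_{i0}=1$, $Z(s)_{ij}=(s_{ij}-s_{i,j-1})/(a_{ij}-a_{i,j-1})$. $v_{ij}\in\mathbb{R}^{n+1}$ has $k$-th component $a_{i,\min\{k,j\}}$. System (HQ) in $(\mu,w,s)$, $w=(w_p)_{p\in E}$: $\mu=\sum_{I\in\mathcal{I}}c_I\sum_{p\in E}(\prod_{i\in I}a_{ip_i})w_p$, $w\ge0$, $\sum_{p\in E}w_p=1$, $s_i=\sum_{j=0}^nv_{ij}\sum_{p\in E:p_i=j}w_p$ for $i\in[d]$. Ideal formulation: projection onto $(f,\mu)$ equals the target set and every extreme point of the continuous relaxation has binary $\delta$. MICP relaxation of the graph: its projection onto $(x,\mu)$ contains $\{(x,\phi(f(x)))\mid x\in X\}$ and its continuous relaxation is convex. *)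

(* Defs.v *)
From HB Require Import structures.
From mathcomp Require Import all_boot all_order all_algebra.
From mathcomp Require Import reals.
Set Implicit Arguments. Unset Strict Implicit. Unset Printing Implicit Defensive.
Import Order.TTheory GRing.Theory Num.Theory.
Local Open Scope ring_scope.

Section Defs.
Variable R : realType.

Definition convex_wrt (T : Type) (cmb : R -> T -> T -> T) (S : T -> Prop) :=
  forall x y t, S x -> S y -> 0 <= t <= 1 -> S (cmb t x y).

Definition hull_wrt (T : Type) (cmb : R -> T -> T -> T) (A : T -> Prop) (y : T) :=
  forall C : T -> Prop, convex_wrt cmb C -> (forall z, A z -> C z) -> C y.

Definition extreme_wrt (T : Type) (cmb : R -> T -> T -> T) (S : T -> Prop) (p : T) :=
  S p /\ forall q r t, S q -> S r -> 0 < t < 1 -> p = cmb t q r -> q = r.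

Definition vcomb (k : nat) (t : R) (x y : 'I_k -> R) : 'I_k -> R :=
  fun i => t * x i + (1 - t) * y i.

(* combination on R^d x R (the (f, mu) space) *)
Definition fmcomb (d : nat) (t : R) (p q : ('I_d -> R) * R) : ('I_d -> R) * R :=
  (vcomb t p.1 q.1, t * p.2 + (1 - t) * q.2).

(* E = {0,..,n}^d is {ffun 'I_d -> 'I_n.+1};  s_i in R^{n+1};
   delta_{it} for t in [l_i - 1], stored at index t-1 : 'I_(l i).-1          *)
Record point (d n : nat) (l : 'I_d -> nat) := Point {
  pmu : R;
  pw : {ffun 'I_d -> 'I_n.+1} -> R;
  ps : 'I_d -> 'I_n.+1 -> R;
  pdelta : forall i : 'I_d, 'I_(l i).-1 -> R }.
Arguments point : clear implicits.
Arguments Point {d n l}.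
Arguments pdelta {d n l} p i t.

Definition pcomb d n l (t : R) (p q : point d n l) : point d n l :=
  Point (t * pmu p + (1 - t) * pmu q)
        (fun e => t * pw p e + (1 - t) * pw q e)
        (fun i j => t * ps p i j + (1 - t) * ps q i j)
        (fun (i : 'I_d) (k : 'I_(l i).-1) => t * pdelta p i k + (1 - t) * pdelta q i k).

(* s_{ij} with a natural-number index j (meaningful for j <= n) *)
Definition sat d n l (p : point d n l) (i : 'I_d) (j : nat) : R :=
  ps p i (inord j).

Definition slast d n l (p : point d n l) : 'I_d -> R := fun i => ps p i ord_max.

Definition Zs d n l (a : 'I_d -> nat -> R) (p : point d n l) (i : 'I_d) (j : nat) : R :=
  if j == 0%N then 1 else (sat p i j - sat p i j.-1) / (a i j - a i j.-1).

Definition phi d (II : {set {set 'I_d}}) (c : {set 'I_d} -> R) (s : 'I_d -> R) : R :=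
  \sum_(I in II) c I * \prod_(i in I) s i.

Definition HQ d n l (a : 'I_d -> nat -> R) (II : {set {set 'I_d}}) (c : {set 'I_d} -> R)
  (p : point d n l) : Prop :=
  [/\ pmu p = \sum_(I in II) c I *
                 \sum_(q : {ffun 'I_d -> 'I_n.+1}) (\prod_(i in I) a i (q i)) * pw p q,
      (forall q, 0 <= pw p q),
      \sum_(q : {ffun 'I_d -> 'I_n.+1}) pw p q = 1 &
      (* s_i = sum_j v_ij sum_{p : p_i = j} w_p, (v_ij)_k = a_{i, min(k,j)} *)
      forall (i : 'I_d) (k : 'I_n.+1),
        ps p i k = \sum_(j < n.+1) a i (minn k j) *
                     \sum_(q : {ffun 'I_d -> 'I_n.+1} | q i == j) pw p q ].

(* (Z(s), delta) satisfies (Inc-1); if bin = false, delta is relaxed to [0,1]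
   (continuous relaxation). *)
Definition Inc1 d n l (a : 'I_d -> nat -> R) (tau : 'I_d -> nat -> nat) (bin : bool)
  (p : point d n l) : Prop :=
  [/\ (* z_i in Delta_i (z_{i0} = 1 holds by definition of Z) *)
      (forall (i : 'I_d) (j : nat), (1 <= j <= n)%N -> Zs a p i j <= Zs a p i j.-1),
      (forall i : 'I_d, 0 <= Zs a p i n),
      (forall (i : 'I_d) (t : 'I_(l i).-1),
          Zs a p i (tau i t.+1) >= pdelta p i t /\
          pdelta p i t >= Zs a p i (tau i t.+1).+1) &
      (forall (i : 'I_d) (t : 'I_(l i).-1),
          if bin then pdelta p i t = 0 \/ pdelta p i t = 1
          else 0 <= pdelta p i t <= 1) ].

Definition formulation d n l a tau II c (bin : bool) (p : point d n l) : Prop :=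
  HQ a II c p /\ Inc1 a tau bin p.

Definition target d (l : 'I_d -> nat) (a : 'I_d -> nat -> R) (tau : 'I_d -> nat -> nat)
  II c (y : ('I_d -> R) * R) : Prop :=
  exists tt : 'I_d -> nat,
    (forall i, (1 <= tt i <= l i)%N) /\
    hull_wrt (@fmcomb d)
      (fun z => z.2 = phi II c z.1 /\
         forall i, a i (tau i (tt i).-1) <= z.1 i <= a i (tau i (tt i))) y.

Definition ideal_formulation d n l (Form : bool -> point d n l -> Prop)
  (Target : ('I_d -> R) * R -> Prop) : Prop :=
  (forall y, Target y <-> exists p, Form true p /\ (slast p, pmu p) = y) /\
  (forall p, extreme_wrt (@pcomb d n l) (Form false) p ->
     forall i t, pdelta p i t = 0 \/ pdelta p i t = 1).

Definition xpcomb m d n l (t : R) (p q : ('I_m -> R) * point d n l) :=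
  (vcomb t p.1 q.1, pcomb t p.2 q.2).

Definition MICP_relaxation m d n l (M : bool -> ('I_m -> R) * point d n l -> Prop)
  (X : ('I_m -> R) -> Prop) (g : ('I_m -> R) -> R) : Prop :=
  (forall x, X x -> exists p, M true (x, p) /\ pmu p = g x) /\
  convex_wrt (@xpcomb m d n l) (M false).

Definition ext_formulation m d n l a tau II c (X : ('I_m -> R) -> Prop)
  (u : ('I_m -> R) -> 'I_d -> 'I_n.+1 -> R) (W : ('I_m -> R) -> ('I_d -> R) -> Prop)
  (bin : bool) (xp : ('I_m -> R) * point d n l) : Prop :=
  [/\ X xp.1, formulation a tau II c bin xp.2,
      (forall i j, u xp.1 i j <= ps xp.2 i j) & W xp.1 (slast xp.2)].

End Defs.

(* Main.v *)
Require Import Defs.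
From HB Require Import structures.
From mathcomp Require Import all_boot all_order all_algebra.
From mathcomp Require Import reals ring lra.
From Stdlib Require Import FunctionalExtensionality.
Import Order.TTheory GRing.Theory Num.Theory.
Set Implicit Arguments. Unset Strict Implicit. Unset Printing Implicit Defensive.
Local Open Scope ring_scope.

Section S.
Variable R : realType.
Variables (d n : nat) (l : 'I_d -> nat) (a : 'I_d -> nat -> R) (tau : 'I_d -> nat -> nat).
Variables (II : {set {set 'I_d}}) (c : {set 'I_d} -> R).
Hypothesis n1 : (1 <= n)%N.
Hypothesis amono : forall (i : 'I_d) (j : nat), (j < n)%N -> a i j < a i j.+1.
Hypothesis tau0 : forall i : 'I_d, tau i 0%N = 0%N.
Hypothesis taumono : forall (i : 'I_d) (t : nat), (t < l i)%N -> (tau i t < tau i t.+1)%N.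
Hypothesis taul : forall i : 'I_d, tau i (l i) = n.

Local Notation Q := {ffun 'I_d -> 'I_n.+1}.
Local Notation pt := (@point R d n l).

Definition mkHQ (w : Q -> R) (dl : forall i : 'I_d, 'I_(l i).-1 -> R) : pt :=
  @Point R d n l (\sum_(I in II) c I * \sum_(q : Q) (\prod_(i in I) a i (q i)) * w q) w
    (fun i k => \sum_(j < n.+1) a i (minn k j) * \sum_(q : Q | q i == j) w q) dl.

Definition Tw (w : Q -> R) i k := \sum_(q : Q) (k <= q i)%N%:R * w q.

Lemma exch (w : Q -> R) (g : nat -> R) i :
  \sum_(j < n.+1) g j * \sum_(q : Q | q i == j) w q = \sum_(q : Q) g (q i) * w q.
Proof.
under eq_bigr do rewrite mulr_sumr.
rewrite (exchange_big_dep xpredT) //=.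
apply: eq_bigr => q _.
by rewrite (big_pred1 (q i)) // => j; rewrite /= eq_sym.
Qed.

Lemma HQ_eta p : HQ a II c p -> p = mkHQ (pw p) (pdelta p).
Proof.
case: p => mu w s dl [/= Hmu _ _ Hs]; rewrite /mkHQ Hmu; congr Point.
by apply: functional_extensionality => i; apply: functional_extensionality => k; rewrite Hs.
Qed.

Lemma HQ_mk w dl : (forall q, 0 <= w q) -> \sum_(q : Q) w q = 1 -> HQ a II c (mkHQ w dl).
Proof. by move=> H1 H2; split. Qed.

Lemma sat_mk w dl i k : (k <= n)%N -> sat (mkHQ w dl) i k = \sum_(q : Q) a i (minn k (q i)) * w q.
Proof. move=> kn; rewrite /sat /=. rewrite (exch w (fun j => a i (minn (inord k : 'I_n.+1) j))) inordK //. Qed.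

Lemma Zs_mk w dl i k : \sum_(q : Q) w q = 1 -> (k <= n)%N -> Zs a (mkHQ w dl) i k = Tw w i k.
Proof.
move=> w1 kn; rewrite /Zs /Tw; case: eqP => [->|k0].
  by rewrite -[in LHS]w1; apply: eq_bigr => q _; rewrite leq0n mul1r.
rewrite (sat_mk w dl i kn) (sat_mk w dl i (leq_trans (leq_pred _) kn)).
have hk : (k.-1 < n)%N by case: k k0 kn {w1} => //.
have kk : k = k.-1.+1 by case: k k0 {kn hk w1}.
have dpos : a i k - a i k.-1 != 0.
  by rewrite subr_eq0 gt_eqF //; move: (amono i hk); rewrite -kk.
rewrite -sumrB mulr_suml; apply: eq_bigr => q _.
rewrite -mulrBl mulrAC; congr (_ * _).
case: (leqP k (q i)) => kq.
  by rewrite (minn_idPl (leq_trans (leq_pred _) kq)) divff.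
rewrite (minn_idPr _) ?subrr ?mul0r //.
by rewrite -ltnS -kk.
Qed.

Lemma tau_le i t t' : (t <= t')%N -> (t' <= l i)%N -> (tau i t <= tau i t')%N.
Proof.
move=> tt'; elim: t' tt' => [|t' IH]; first by rewrite leqn0 => /eqP ->.
rewrite leq_eqVlt => /orP [/eqP -> //| ]; rewrite ltnS => tt' lt'.
apply: leq_trans (IH tt' (ltnW lt')) (ltnW (taumono lt')).
Qed.

Lemma tau_lt i t t' : (t < t')%N -> (t' <= l i)%N -> (tau i t < tau i t')%N.
Proof.
move=> tt' lt'; apply: leq_trans (taumono (leq_trans tt' lt')) _.
exact: tau_le.
Qed.

Lemma tau_n i t : (t <= l i)%N -> (tau i t <= n)%N.
Proof. by move=> h; rewrite -(taul i); apply: tau_le. Qed.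

Lemma tau_ord i (t : 'I_(l i).-1) : ((tau i t.+1).+1 <= n)%N.
Proof.
rewrite -(taul i); apply: tau_lt => //.
by case: t => /= t; case: (l i).
Qed.

Lemma Tw_ge0 w i k : (forall q, 0 <= w q) -> 0 <= Tw w i k.
Proof. by move=> H; apply: sumr_ge0 => q _; apply: mulr_ge0. Qed.

Lemma Tw_mono w i k k' : (forall q, 0 <= w q) -> (k <= k')%N -> Tw w i k' <= Tw w i k.
Proof.
move=> H kk; apply: ler_sum => q _; apply: ler_wpM2r => //.
by rewrite ler_nat; case: (leqP k' (q i)) => // /(leq_trans kk) ->.
Qed.

Lemma Tw_le1 w i k : (forall q, 0 <= w q) -> \sum_(q : Q) w q = 1 -> Tw w i k <= 1.
Proof.
move=> H1 H2; rewrite -H2; apply: ler_sum => q _.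
by case: (k <= q i)%N; rewrite ?mul1r ?mul0r.
Qed.

Definition dcond (b : bool) (w : Q -> R) (dl : forall i : 'I_d, 'I_(l i).-1 -> R) :=
  forall i (t : 'I_(l i).-1),
    Tw w i (tau i t.+1).+1 <= dl i t <= Tw w i (tau i t.+1) /\
    (if b then dl i t = 0 \/ dl i t = 1 else 0 <= dl i t <= 1).

Lemma Inc1_iff b w dl : (forall q, 0 <= w q) -> \sum_(q : Q) w q = 1 ->
  Inc1 a tau b (mkHQ w dl) <-> dcond b w dl.
Proof.
move=> H1 H2; split.
  case=> _ _ H3 H4 i t; have tn := tau_ord t.
  have [] := H3 i t; rewrite !Zs_mk //; last exact: ltnW.
  by move=> h1 h2; split; [rewrite h1 h2|apply: H4].
move=> H; split.
- move=> i j /andP [j1 jn]; rewrite !Zs_mk //; last exact: leq_trans (leq_pred _) jn.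
  exact: Tw_mono (leq_pred _).
- by move=> i; rewrite Zs_mk //; apply: Tw_ge0.
- move=> i t; have tn := tau_ord t; rewrite !Zs_mk //; last exact: ltnW.
  by have [/andP [h1 h2] _] := H i t.
- by move=> i t; have [] := H i t.
Qed.

Lemma pcomb_mk t w1 d1 w2 d2 : pcomb t (mkHQ w1 d1) (mkHQ w2 d2) =
  mkHQ (fun q => t * w1 q + (1 - t) * w2 q) (fun i k => t * d1 i k + (1 - t) * d2 i k).
Proof.
rewrite /pcomb /mkHQ /=; congr Point.
  rewrite !mulr_sumr -big_split; apply: eq_bigr => I _ /=.
  rewrite !mulr_sumr -big_split; apply: eq_bigr => q _ /=; ring.
apply: functional_extensionality => i; apply: functional_extensionality => k.
rewrite !mulr_sumr -big_split; apply: eq_bigr => j _ /=.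
rewrite !mulr_sumr -big_split; apply: eq_bigr => q _ /=; ring.
Qed.

Lemma Tw_comb t w1 w2 i k : Tw (fun q => t * w1 q + (1 - t) * w2 q) i k =
  t * Tw w1 i k + (1 - t) * Tw w2 i k.
Proof.
rewrite /Tw !mulr_sumr -big_split; apply: eq_bigr => q _ /=; ring.
Qed.

Lemma form_comb b (p1 p2 : pt) t : 0 <= t <= 1 -> formulation a tau II c b p1 ->
  formulation a tau II c b p2 -> (b -> forall i (k : 'I_(l i).-1), pdelta p1 k = pdelta p2 k) ->
  formulation a tau II c b (pcomb t p1 p2).
Proof.
move=> /andP [t0 t1] [H1 I1] [H2 I2] Hb.
have E1 := HQ_eta H1; have E2 := HQ_eta H2.
case: H1 => _ Hw1 Hs1 _; case: H2 => _ Hw2 Hs2 _.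
rewrite E1 in I1; rewrite E2 in I2.
move/(Inc1_iff _ _ Hw1 Hs1): I1 => D1; move/(Inc1_iff _ _ Hw2 Hs2): I2 => D2.
have t1' : 0 <= 1 - t by rewrite subr_ge0.
have Hw : forall q, 0 <= t * pw p1 q + (1 - t) * pw p2 q.
  by move=> q; apply: addr_ge0; apply: mulr_ge0.
have Hs : \sum_(q : Q) (t * pw p1 q + (1 - t) * pw p2 q) = 1.
  by rewrite big_split /= -!mulr_sumr Hs1 Hs2; ring.
rewrite E1 E2 pcomb_mk; split; first exact: HQ_mk.
apply/(Inc1_iff _ _ Hw Hs) => i k; rewrite !Tw_comb.
have [/andP [a1 a2] b1] := D1 i k; have [/andP [a3 a4] b2] := D2 i k.
split.
  by apply/andP; split; apply: lerD; apply: ler_wpM2l.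
case: b Hb b1 b2 {D1 D2} => [Hb|_] b1 b2.
  by rewrite (Hb isT i k) -mulrDl subrKC mul1r.
case/andP: b1 => b1 b1'; case/andP: b2 => b2 b2'.
apply/andP; split; first by apply: addr_ge0; apply: mulr_ge0.
apply: le_trans (_ : t * 1 + (1 - t) * 1 <= 1); last by rewrite !mulr1 subrKC.
by apply: lerD; apply: ler_wpM2l.
Qed.

Lemma sum_ind N k (g : nat -> R) : (k < N)%N ->
  \sum_(m < N) g m * (m == k :> nat)%:R = g k.
Proof.
move=> kN; rewrite (bigD1 (Ordinal kN)) //= eqxx mulr1 big1 ?addr0 // => m hm.
rewrite (_ : (m == k :> nat) = false) ?mulr0 //; apply/negbTE.
by apply: contra hm => /eqP h; apply/eqP; apply: val_inj.
Qed.

Section Cons.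
Variables (f : 'I_d -> R) (j : 'I_d -> nat).
Hypothesis jn : forall i, (j i < n)%N.
Hypothesis fj : forall i, a i (j i) <= f i <= a i (j i).+1.

Definition lam i := (f i - a i (j i)) / (a i (j i).+1 - a i (j i)).
Definition pi i (m : nat) := (1 - lam i) * (m == j i)%:R + lam i * (m == (j i).+1)%:R.
Definition wc (q : Q) := \prod_i pi i (q i).
Definition dc i (t : 'I_(l i).-1) : R := (tau i t.+1 <= j i)%N%:R.

Lemma den_gt0 i : 0 < a i (j i).+1 - a i (j i).
Proof. by rewrite subr_gt0; apply: amono. Qed.

Lemma lam01 i : 0 <= lam i <= 1.
Proof.
have := den_gt0 i; have /andP [h1 h2] := fj i => h.
rewrite /lam; apply/andP; split.
  by apply: divr_ge0; [rewrite subr_ge0 | apply: ltW].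
by rewrite ler_pdivrMr // mul1r lerD2r.
Qed.

Lemma pi_ge0 i m : 0 <= pi i m.
Proof.
have /andP [h1 h2] := lam01 i.
by apply: addr_ge0; apply: mulr_ge0; rewrite ?subr_ge0 ?ler0n.
Qed.

Lemma sumpi i (g : nat -> R) : \sum_(m < n.+1) g m * pi i m =
  (1 - lam i) * g (j i) + lam i * g (j i).+1.
Proof.
have h1 : (j i < n.+1)%N by apply: ltnW; rewrite ltnS.
have h2 : ((j i).+1 < n.+1)%N by rewrite ltnS.
rewrite /pi; under eq_bigr do rewrite mulrDr mulrCA [g _ * (_ * _)]mulrCA.
by rewrite big_split /= -!mulr_sumr !sum_ind.
Qed.

Lemma PL (H : 'I_d -> nat -> R) :
  \sum_(q : Q) (\prod_i H i (q i)) * wc q = \prod_i \sum_(m < n.+1) H i m * pi i m.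
Proof.
rewrite bigA_distr_bigA /=; apply: eq_bigr => q _.
by rewrite /wc -big_split.
Qed.

Lemma wc_ge0 q : 0 <= wc q.
Proof. by apply: prodr_ge0 => i _; apply: pi_ge0. Qed.

Lemma wc_sum : \sum_(q : Q) wc q = 1.
Proof.
transitivity (\sum_(q:Q) (\prod_(i : 'I_d) ((fun _ _ => 1 : R) i (q i))) * wc q).
  by apply: eq_bigr => q _; rewrite big1 ?mul1r.
rewrite (PL (fun _ _ => 1)); apply: big1 => i _; rewrite (sumpi i (fun _ => 1)); ring.
Qed.

Lemma marg i0 (G : nat -> R) :
  \sum_(q : Q) G (q i0) * wc q = (1 - lam i0) * G (j i0) + lam i0 * G (j i0).+1.
Proof.
transitivity (\sum_(q : Q) (\prod_i ((fun i m => if i == i0 then G m else 1) i (q i))) * wc q).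
  apply: eq_bigr => q _ /=.
  by rewrite (bigD1 i0) //= eqxx big1 ?mulr1 // => i /negbTE ->.
rewrite (PL (fun i m => if i == i0 then G m else 1)) (bigD1 i0) //= eqxx (sumpi i0 G).
rewrite big1 ?mulr1 // => i /negbTE ->; rewrite (sumpi i (fun _ => 1)); ring.
Qed.

Lemma lam_f i : (1 - lam i) * a i (j i) + lam i * a i (j i).+1 = f i.
Proof.
have := den_gt0 i; rewrite /lam => h; field.
by rewrite gt_eqF.
Qed.

Definition pc : pt := mkHQ wc dc.

Lemma pc_ps i (k : 'I_n.+1) : ps pc i k = if (k <= j i)%N then a i k else f i.
Proof.
rewrite /pc /mkHQ /= (exch wc (fun m => a i (minn k m))) (marg i (fun m => a i (minn k m))).
case: leqP => kj.
  by rewrite (minn_idPl (leqW kj)); ring.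
by rewrite (minn_idPr kj) lam_f.
Qed.

Lemma pc_slast i : slast pc i = f i.
Proof. by rewrite /slast pc_ps leqNgt (leq_trans (jn i)) //. Qed.

Lemma pc_mu : pmu pc = phi II c f.
Proof.
rewrite /pc /mkHQ /= /phi; apply: eq_bigr => I _; congr (_ * _).
have := PL (fun i m => if i \in I then a i m else 1) => E.
transitivity (\sum_(q : Q) (\prod_i (if i \in I then a i (q i) else 1)) * wc q).
  by apply: eq_bigr => q _; rewrite -big_mkcond.
rewrite E [RHS]big_mkcond; apply: eq_bigr => i _.
by case: ifP => _; [rewrite (sumpi i (a i)) lam_f | rewrite (sumpi i (fun _ => 1)); ring].
Qed.

Lemma pc_Tw i k : Tw wc i k = (1 - lam i) * (k <= j i)%N%:R + lam i * (k <= (j i).+1)%N%:R.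
Proof. exact: (marg i (fun m => (k <= m)%N%:R)). Qed.

Lemma pc_form : formulation a tau II c true pc.
Proof.
split; first exact: HQ_mk wc_ge0 wc_sum.
apply/(Inc1_iff _ _ wc_ge0 wc_sum) => i t; rewrite /dc.
case: leqP => tj.
  have -> : Tw wc i (tau i t.+1) = 1 by rewrite pc_Tw tj (leqW tj) /=; ring.
  split; last by right.
  by rewrite lexx andbT; apply: Tw_le1; [exact: wc_ge0| exact: wc_sum].
have h1 : ((tau i t.+1).+1 <= j i)%N = false by apply/negbTE; rewrite -ltnNge ltnS ltnW.
have h2 : ((tau i t.+1).+1 <= (j i).+1)%N = false by rewrite ltnS leqNgt tj.
rewrite pc_Tw h1 h2 /= !mulr0 addr0; split; last by left.
by rewrite lexx /= Tw_ge0 //; exact: wc_ge0.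
Qed.
End Cons.

Lemma find_seg i (x : R) lo hi : (lo < hi)%N -> (hi <= n)%N -> a i lo <= x <= a i hi ->
  exists k, [/\ (lo <= k)%N, (k < hi)%N & a i k <= x <= a i k.+1].
Proof.
elim: hi => [//|hi IH] lohi hin /andP [h1 h2].
have hn : (hi < n)%N by [].
have [lh|hl] := ltnP lo hi; last first.
  have E : lo = hi by apply/eqP; rewrite eqn_leq hl -ltnS lohi.
  by subst lo; exists hi; split; rewrite ?h1 ?h2.
case: (leP x (a i hi)) => xh.
  have [k [k1 k2 k3]] := IH lh (ltnW hn) (introT andP (conj h1 xh)).
  by exists k; split => //; apply: ltnW.
exists hi; split; [exact: ltnW | by [] | ].
by rewrite h2 andbT ltW.
Qed.

Definition ptsum (T : Type) (s : seq T) (w : T -> R) (z : T -> ('I_d -> R) * R) :=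
  (fun i => \sum_(q <- s) w q * (z q).1 i, \sum_(q <- s) w q * (z q).2).

Lemma sum_pos (T : eqType) (w : T -> R) (s : seq T) : s <> [::] ->
  (forall q, q \in s -> 0 < w q) -> 0 < \sum_(q <- s) w q.
Proof.
elim: s => [//|x s IH] _ H; rewrite big_cons.
case: s IH H => [|y s] IH H; first by rewrite big_nil addr0; apply: H; rewrite mem_head.
apply: addr_gt0; first by apply: H; rewrite mem_head.
by apply: IH => // q hq; apply: H; rewrite in_cons hq orbT.
Qed.

Lemma hull_seq (T : eqType) (A C : ('I_d -> R) * R -> Prop) (w : T -> R) (z : T -> ('I_d -> R) * R) (s : seq T) :
  convex_wrt (@fmcomb R d) C -> (forall y, A y -> C y) -> s <> [::] ->
  (forall q, q \in s -> 0 < w q /\ A (z q)) ->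
  C ((fun i => (ptsum s w z).1 i / \sum_(q <- s) w q), (ptsum s w z).2 / \sum_(q <- s) w q).
Proof.
move=> Cc AC; elim: s => [//|x s IH] _ Hs.
have [wx Ax] := Hs x (mem_head _ _).
case: s IH Hs => [|y s] IH Hs.
  rewrite /ptsum !big_cons !big_nil /=; case E: (z x) => [z1 z2].
  rewrite E in Ax; apply: AC; move: Ax; congr A; congr pair.
    by apply: functional_extensionality => i; rewrite big_cons big_nil E /= !addr0; field; rewrite gt_eqF.
  by rewrite /= !addr0; field; rewrite gt_eqF.
have Hs' : forall q, q \in y :: s -> 0 < w q /\ A (z q).
  by move=> q hq; apply: Hs; rewrite in_cons hq orbT.
have IH' := IH (fun h => match h with end) Hs'.
set W' := \sum_(q <- y :: s) w q.
have W'pos : 0 < W'.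
  by apply: sum_pos => // q /Hs' [].
set t := w x / (w x + W').
have Wpos : 0 < w x + W' by apply: addr_gt0.
have t01 : 0 <= t <= 1.
  apply/andP; split; first by apply: divr_ge0; apply: ltW.
  by rewrite ler_pdivrMr // mul1r lerDl ltW.
have := Cc _ _ t (AC _ Ax) IH' t01.
have W'ne : W' != 0 by rewrite gt_eqF.
have Wne : w x + W' != 0 by rewrite gt_eqF.
move: W'ne Wne; rewrite /t /W' /fmcomb /ptsum /= !big_cons; case E: (z x) => [z1 z2] /= W'ne Wne.
congr C; congr pair.
  apply: functional_extensionality => i; rewrite /vcomb !big_cons E /=.
  by field; rewrite W'ne Wne.
by field; rewrite W'ne Wne.
Qed.

Lemma hull_fin (T : finType) (A C : ('I_d -> R) * R -> Prop) (w : T -> R) (z : T -> ('I_d -> R) * R) :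
  convex_wrt (@fmcomb R d) C -> (forall y, A y -> C y) -> (forall q, 0 <= w q) ->
  \sum_q w q = 1 -> (forall q, w q != 0 -> A (z q)) ->
  C (fun i => \sum_q w q * (z q).1 i, \sum_q w q * (z q).2).
Proof.
move=> Cc AC w0 w1 Az.
set s := [seq q <- enum T | w q != 0].
have key : forall F : T -> R, \sum_(q <- s) w q * F q = \sum_q w q * F q.
  move=> F; rewrite big_filter big_mkcond /= big_enum /=; apply: eq_bigr => q _.
  by case: eqP => // ->; rewrite mul0r.
have ws : \sum_(q <- s) w q = 1.
  have := key (fun _ => 1); under eq_bigr do rewrite mulr1.
  by under [X in _ = X -> _]eq_bigr do rewrite mulr1; move=> ->.
have sne : s <> [::] by move=> E; move: ws; rewrite E big_nil => /eqP; rewrite eq_sym oner_eq0.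
have Hs : forall q, q \in s -> 0 < w q /\ A (z q).
  move=> q; rewrite mem_filter => /andP [h _]; split; last exact: Az.
  by rewrite lt_def h w0.
have := hull_seq Cc AC sne Hs; rewrite ws /ptsum; congr C; congr pair.
  apply: functional_extensionality => i; rewrite divr1.
  first [exact: (key (fun q => (z q).1 i)) | exact: esym (key (fun q => (z q).1 i))].
rewrite divr1; first [exact: (key (fun q => (z q).2)) | exact: esym (key (fun q => (z q).2))].
Qed.

Lemma supp1 (w : Q -> R) i k : (forall q, 0 <= w q) -> \sum_(q : Q) w q = 1 -> 1 <= Tw w i k ->
  forall q, w q != 0 -> (k <= q i)%N.
Proof.
move=> H0 H1 HT q wq.
have E : \sum_(q : Q) (1 - (k <= q i)%N%:R) * w q = 0.
  apply/eqP; rewrite eq_le; apply/andP; split; last first.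
    by apply: sumr_ge0 => q' _; apply: mulr_ge0 => //; case: (k <= q' i)%N; rewrite ?subrr ?subr0.
  under eq_bigr do rewrite mulrBl mul1r.
  by rewrite sumrB H1 subr_le0.
have Hn : forall q' : Q, xpredT q' -> 0 <= (1 - (k <= q' i)%N%:R) * w q'.
  by move=> q' _; apply: mulr_ge0 => //; case: (k <= q' i)%N; rewrite ?subrr ?subr0.
have := @psumr_eq0P _ _ xpredT _ Hn E q isT.
case: (k <= q i)%N => //= h; case/negP: wq; apply/eqP; rewrite -h; ring.
Qed.

Lemma supp0 (w : Q -> R) i k : (forall q, 0 <= w q) -> Tw w i k <= 0 ->
  forall q, w q != 0 -> (q i < k)%N.
Proof.
move=> H0 HT q wq.
have E : Tw w i k = 0 by apply/eqP; rewrite eq_le HT Tw_ge0.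
have Hn : forall q' : Q, xpredT q' -> 0 <= (k <= q' i)%N%:R * w q'.
  by move=> q' _; apply: mulr_ge0.
have := @psumr_eq0P _ _ xpredT _ Hn E q isT.
rewrite ltnNge; case: (k <= q i)%N => //= h; case/negP: wq; apply/eqP; rewrite -h; ring.
Qed.

Lemma a_le i j k : (j <= k)%N -> (k <= n)%N -> a i j <= a i k.
Proof.
move=> jk; elim: k jk => [|k IH]; first by rewrite leqn0 => /eqP ->.
rewrite leq_eqVlt => /orP [/eqP -> //|]; rewrite ltnS => jk kn.
apply: le_trans (IH jk (ltnW kn)) (ltW (amono i kn)).
Qed.

Lemma l_pos i : (0 < l i)%N.
Proof.
case E: (l i) => //; have := taul i; rewrite E tau0 => h.
by move: n1; rewrite -h.
Qed.

Definition zq (q : Q) : ('I_d -> R) * R :=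
  (fun i => a i (q i), phi II c (fun i => a i (q i))).

Lemma form_target (p : pt) : formulation a tau II c true p ->
  target l a tau II c (slast p, pmu p).
Proof.
case=> H I; have E := HQ_eta H; case: H => Hmu Hw Hs Hps.
rewrite E in I; move/(Inc1_iff _ _ Hw Hs): I => D.
pose P i := fun t => (0 < t <= l i)%N && ((t == l i) ||
   [exists t' : 'I_(l i).-1, (t'.+1 == t) && (pdelta p t' == 0)]).
have exP : forall i, exists t, P i t.
  by move=> i; exists (l i); rewrite /P l_pos leqnn eqxx.
pose tt i := ex_minn (exP i).
have ttP : forall i, P i (tt i) /\ forall m, P i m -> (tt i <= m)%N.
  by move=> i; rewrite /tt; case: ex_minnP.
exists tt; split.
  by move=> i; have [/andP [] ] := ttP i.
move=> C Cc AC.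
have -> : (slast p, pmu p) =
    (fun i => \sum_q pw p q * (zq q).1 i, \sum_q pw p q * (zq q).2).
  congr pair.
    apply: functional_extensionality => i.
    rewrite /slast Hps (exch (pw p) (fun j => a i (minn (@ord_max n) j))).
    apply: eq_bigr => q _ /=; rewrite mulrC (minn_idPr _) //.
    by rewrite -ltnS ltn_ord.
  rewrite Hmu /phi /zq /=; under eq_bigr do rewrite mulr_sumr.
  rewrite exchange_big /=; apply: eq_bigr => q _.
  by rewrite mulr_sumr; apply: eq_bigr => I _; ring.
apply: (hull_fin Cc AC Hw Hs) => q wq; split => // i /=.
have [/andP [/andP [t0 tl] Pt] tmin] := ttP i.
have qn : (q i <= n)%N by rewrite -ltnS ltn_ord.
have lo : (tau i (tt i).-1 <= q i)%N.
  case E1: (tt i) => [|t]; first by rewrite E1 in t0.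
  case: t E1 => [|t] E1; first by rewrite tau0.
  have ht : (t < (l i).-1)%N by rewrite -ltnS (ltn_predK (l_pos i)) -E1.
  pose t' := Ordinal ht.
  have dne : pdelta p t' != 0.
    apply/negP => /eqP d0.
    have : P i t.+1.
      rewrite /P /= (leq_trans (leqnSn _)) -?E1 //=; apply/orP; right.
      by apply/existsP; exists t'; rewrite /= eqxx d0 eqxx.
    by move/tmin; rewrite E1 ltnn.
  have [/andP [_ h2] h3] := D i t'.
  have d1 : pdelta p t' = 1 by case: h3 => // h; rewrite h eqxx in dne.
  rewrite d1 in h2.
  exact: (supp1 Hw Hs h2 wq).
have hi : (q i <= tau i (tt i))%N.
  case/orP: Pt => [/eqP -> | /existsP [t' /andP [/eqP Et' /eqP d0]]].
    by rewrite taul.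
  have [/andP [h1 _] _] := D i t'.
  rewrite d0 in h1.
  by rewrite -Et' -ltnS; apply: (supp0 Hw h1 wq).
by apply/andP; split; apply: a_le => //; exact: tau_n.
Qed.

Lemma target_form y : target l a tau II c y ->
  exists p : pt, formulation a tau II c true p /\ (slast p, pmu p) = y.
Proof.
case=> tt [ttb Hh].
pose dd i (t : 'I_(l i).-1) : R := (t.+1 < tt i)%N%:R.
pose C y := exists p : pt, [/\ formulation a tau II c true p,
   (forall i (t : 'I_(l i).-1), pdelta p t = dd i t) & (slast p, pmu p) = y].
suff : C y by case=> p [h1 _ h3]; exists p.
apply: Hh.
  move=> y1 y2 t [p1 [F1 D1 E1]] [p2 [F2 D2 E2]] t01.
  exists (pcomb t p1 p2); split.
  - by apply: form_comb => // _ i k; rewrite D1 D2.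
  - by move=> i k /=; rewrite D1 D2; ring.
  - by rewrite -E1 -E2.
move=> z [z2 box].
have H : forall i, exists k, ((tau i (tt i).-1 <= k)%N && (k < tau i (tt i))%N) &&
                          (a i k <= z.1 i <= a i k.+1).
  move=> i; have /andP [t1 tl] := ttb i.
  have lohi : (tau i (tt i).-1 < tau i (tt i))%N.
    by apply: tau_lt => //; rewrite prednK.
  have [k [k1 k2 k3]] := find_seg lohi (tau_n tl) (box i).
  by exists k; rewrite k1 k2 k3.
pose j i := xchoose (H i).
have jP : forall i, _ := fun i => xchooseP (H i).
have jn : forall i, (j i < n)%N.
  move=> i; have /andP [/andP [_ h] _] := jP i.
  by apply: leq_trans h (tau_n _); have /andP [] := ttb i.
have fj : forall i, a i (j i) <= z.1 i <= a i (j i).+1.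
  by move=> i; have /andP [_ h] := jP i.
exists (pc z.1 j); split.
- exact: pc_form.
- move=> i t; rewrite /= /dc /dd; congr (_ %:R); congr nat_of_bool.
  have /andP [t1 tl] := ttb i.
  have /andP [/andP [h1 h2] _] := jP i.
  have tl' : (t.+1 <= l i)%N.
    by apply: leq_trans (ltn_ord t) _; rewrite -ltnS prednK ?l_pos.
  case: (ltnP t.+1 (tt i)) => h.
    apply: leq_trans h1; apply: tau_le; last by rewrite (leq_trans (leq_pred _)).
    by rewrite -ltnS prednK.
  apply/negbTE; rewrite -ltnNge; apply: leq_trans h2 _.
  exact: tau_le.
- rewrite [RHS]surjective_pairing z2; congr pair.
    by apply: functional_extensionality => i; rewrite pc_slast.
  exact: pc_mu.
Qed.

Lemma sum_q_ind (F : Q -> R) q0 : \sum_(q : Q) F q * (q == q0)%:R = F q0.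
Proof.
rewrite (bigD1 q0) //= eqxx mulr1 big1 ?addr0 // => q /negbTE ->.
by rewrite mulr0.
Qed.

Lemma Tw_ind q0 i k : Tw (fun q => (q == q0)%:R) i k = (k <= q0 i)%N%:R.
Proof. by rewrite /Tw sum_q_ind. Qed.

Lemma Tw_diff (w : Q -> R) i k :
  Tw w i k - Tw w i k.+1 = \sum_(q : Q) (q i == k :> nat)%:R * w q.
Proof.
rewrite /Tw -sumrB; apply: eq_bigr => q _; rewrite -mulrBl; congr (_ * _).
case: (ltngtP (q i) k) => h.
- by rewrite subrr.
- by rewrite subrr.
- by rewrite subr0.
Qed.

Lemma ext_point (p : pt) q0 : extreme_wrt (@pcomb R d n l) (formulation a tau II c false) p ->
  0 < pw p q0 -> pw p q0 = 1.
Proof.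
case=> [[H I] Hext] wpos.
have E := HQ_eta H; case: H => _ Hw Hs _.
rewrite E in I; move/(Inc1_iff _ _ Hw Hs): I => D.
set w := pw p in Hw Hs D wpos E *; set dl := pdelta p in D E *.
set ws := w q0.
have wle : ws <= 1.
  rewrite -Hs (bigD1 q0) //= lerDl; apply: sumr_ge0 => q _; exact: Hw.
case: (ltP ws 1) => wlt; last by apply/eqP; rewrite eq_le wle.
exfalso.
have D0 : 0 < 1 - ws by rewrite subr_gt0.
have D0' : 1 - ws != 0 by rewrite gt_eqF.
pose ds i (t : 'I_(l i).-1) : R :=
  let ta := tau i t.+1 in
  if (q0 i < ta)%N then 0 else if (ta < q0 i)%N then 1
  else (dl i t - Tw w i ta.+1) / (Tw w i ta - Tw w i ta.+1).
pose wv (q : Q) : R := (q == q0)%:R.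
pose wr (q : Q) : R := (w q - ws * (q == q0)%:R) / (1 - ws).
pose dr i (t : 'I_(l i).-1) : R := (dl i t - ws * ds i t) / (1 - ws).
have Ep : p = pcomb ws (mkHQ wv ds) (mkHQ wr dr).
  rewrite pcomb_mk E; congr mkHQ.
    apply: functional_extensionality => q; rewrite /wv /wr.
    by field.
  apply: functional_extensionality_dep => i; apply: functional_extensionality => t.
  by rewrite /dr; field.
have wv0 : forall q, 0 <= wv q by move=> q; rewrite ler0n.
have wv1 : \sum_(q : Q) wv q = 1.
  by rewrite -(sum_q_ind (fun _ => 1) q0); apply: eq_bigr => q _; rewrite mul1r.
have wr0 : forall q, 0 <= wr q.
  move=> q; rewrite /wr; apply: divr_ge0; last exact: ltW.
  by case: eqP => [->|_]; rewrite ?mulr1 ?subrr // mulr0 subr0.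
have Twr : forall i k, Tw wr i k = (Tw w i k - ws * (k <= q0 i)%N%:R) / (1 - ws).
  move=> i k; rewrite /Tw -(sum_q_ind (fun q => ws * (k <= q i)%N%:R) q0) -sumrB mulr_suml.
  by apply: eq_bigr => q _; rewrite /wr; field.
have wr1 : \sum_(q : Q) wr q = 1.
  transitivity ((\sum_(q : Q) w q - \sum_(q : Q) (fun _ => ws) q * (q == q0)%:R) / (1 - ws)).
    by rewrite -sumrB mulr_suml.
  by rewrite sum_q_ind Hs divff.
have Fv : formulation a tau II c false (mkHQ wv ds).
  split; first exact: HQ_mk.
  apply/(Inc1_iff _ _ wv0 wv1) => i t; rewrite !Tw_ind /ds /=.
  have [/andP [h1 h2] _] := D i t.
  case: (ltngtP (q0 i) (tau i t.+1)) => h.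
    by rewrite /= ?mulr0n ?mulr1n; split; rewrite ?lexx ?ler01.
  - by rewrite /= ?mulr0n ?mulr1n; split; rewrite ?lexx ?ler01.
  - rewrite /= ?mulr0n ?mulr1n.
    have bpos : 0 < Tw w i (tau i t.+1) - Tw w i (tau i t.+1).+1.
      rewrite Tw_diff; apply: lt_le_trans wpos _.
      rewrite (bigD1 q0) //= h eqxx mul1r lerDl.
      by apply: sumr_ge0 => q _; apply: mulr_ge0.
    have y0 : 0 <= (dl i t - Tw w i (tau i t.+1).+1) / (Tw w i (tau i t.+1) - Tw w i (tau i t.+1).+1).
      by apply: divr_ge0; [rewrite subr_ge0|exact: ltW].
    have y1 : (dl i t - Tw w i (tau i t.+1).+1) / (Tw w i (tau i t.+1) - Tw w i (tau i t.+1).+1) <= 1.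
      by rewrite ler_pdivrMr // mul1r lerD2r.
    by split; apply/andP; split.
have Fr : formulation a tau II c false (mkHQ wr dr).
  split; first exact: HQ_mk.
  apply/(Inc1_iff _ _ wr0 wr1) => i t; rewrite !Twr /dr /ds /=.
  have [/andP [h1 h2] _] := D i t.
  set T0 := Tw w i (tau i t.+1); set T1 := Tw w i (tau i t.+1).+1; set d0 := dl i t.
  suff : (T1 - ws * ((tau i t.+1).+1 <= q0 i)%N%:R) / (1 - ws) <=
      (d0 - ws * ds i t) / (1 - ws) <= (T0 - ws * (tau i t.+1 <= q0 i)%N%:R) / (1 - ws).
    move=> /andP [k1 k2]; split; first by apply/andP.
    move: k1 k2; rewrite -!Twr => k1 k2; apply/andP; split.
      exact: le_trans (Tw_ge0 _ _ wr0) k1.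
    exact: le_trans k2 (Tw_le1 _ _ wr0 wr1).
  rewrite !ler_pM2r ?invr_gt0 // /ds /=.
  case: (ltngtP (q0 i) (tau i t.+1)) => h.
  - by rewrite /= ?mulr0n ?mulr1n ?mulr0 ?subr0 h1 h2.
  - by rewrite /= ?mulr0n ?mulr1n ?mulr1 !lerD2r h1 h2.
  - rewrite /= ?mulr0n ?mulr1n ?mulr1 ?mulr0 ?subr0.
    have bge : ws <= T0 - T1.
      rewrite /T0 /T1 Tw_diff (bigD1 q0) //= h eqxx mul1r lerDl.
      by apply: sumr_ge0 => q _; apply: mulr_ge0.
    have bpos : 0 < T0 - T1 by apply: lt_le_trans wpos bge.
    set y := (d0 - T1) / (T0 - T1).
    have yb : y * (T0 - T1) = d0 - T1 by rewrite /y mulfVK // gt_eqF.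
    have y0 : 0 <= y by apply: divr_ge0; [rewrite subr_ge0|exact: ltW].
    have y1 : y <= 1 by rewrite /y ler_pdivrMr // mul1r lerD2r.
    apply/andP; split; nra.
have := Hext _ _ ws Fv Fr; rewrite wpos wlt => /(_ isT Ep) Evr.
have := congr1 (fun p : pt => pw p q0) Evr; rewrite /= /wv /wr eqxx mulr1 subrr mul0r.
by move/eqP; rewrite oner_eq0.
Qed.

Lemma perturb (p : pt) i0 (t0 : 'I_(l i0).-1) :
  extreme_wrt (@pcomb R d n l) (formulation a tau II c false) p ->
  Zs a p i0 (tau i0 t0.+1) = 1 -> Zs a p i0 (tau i0 t0.+1).+1 = 0 ->
  pdelta p t0 = 0 \/ pdelta p t0 = 1.
Proof.
case: p => mu w s dl [[H I] Hext] Z0 Z1 /=.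
case: (eqVneq (dl i0 t0) 0) => [->|h0]; first by left.
case: (eqVneq (dl i0 t0) 1) => [->|h1]; first by right.
exfalso.
have [_ _ I3 I4] := I.
have /andP [d0 d1] := I4 i0 t0.
have d0' : 0 < dl i0 t0 by rewrite lt_def h0 d0.
have d1' : dl i0 t0 < 1 by rewrite lt_def eq_sym h1 d1.
set x := dl i0 t0 in d0 d1 d0' d1' h0 h1.
pose e := Num.min x (1 - x).
have e0 : 0 < e by rewrite lt_min d0' subr_gt0 d1'.
have ex : e <= x by rewrite ge_min lexx.
have ex' : e <= 1 - x by rewrite ge_min lexx orbT.
pose pe (y : R) : pt := Point mu w s
  (fun i t => if (i == i0) && (val t == val t0) then y else dl i t).
have Fe : forall y, 0 <= y <= 1 -> formulation a tau II c false (pe y).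
  move=> y /andP [y0 y1]; split; first exact: H.
  case: I => I1 I2 _ _; split => //.
    move=> i t /=; case: ifP => [/andP [/eqP Ei /eqP Et]|_]; last exact: I3.
    subst i; have -> : t = t0 by apply: val_inj.
    have -> : Zs a (pe y) i0 (tau i0 t0.+1) = 1 := Z0.
    have -> : Zs a (pe y) i0 (tau i0 t0.+1).+1 = 0 := Z1.
    by split.
  move=> i t /=; case: ifP => _; last exact: I4.
  by rewrite y0 y1.
have Ep : Point mu w s dl = pcomb (1/2) (pe (x + e)) (pe (x - e)).
  rewrite /pcomb /=; congr Point.
  - by field.
  - by apply: functional_extensionality => q; field.
  - by apply: functional_extensionality => i; apply: functional_extensionality => j; field.
  apply: functional_extensionality_dep => i; apply: functional_extensionality => t.
  case: ifP => [/andP [/eqP Ei /eqP Et]|_]; last by field.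
  subst i; have -> : t = t0 by apply: val_inj.
  by rewrite /x; field.
have F1 : formulation a tau II c false (pe (x + e)).
  by apply: Fe; apply/andP; split; [apply: addr_ge0 => //; apply: ltW | rewrite -lerBrDl].
have F2 : formulation a tau II c false (pe (x - e)).
  by apply: Fe; apply/andP; split; [rewrite subr_ge0 | rewrite lerBlDr; apply: ler_wpDr => //; apply: ltW].
have := Hext _ _ (1/2) F1 F2.
have h12 : (0 < 1 / 2 :> R) && (1 / 2 < 1 :> R) by apply/andP; split; lra.
move=> /(_ h12 Ep) Eq.
have := congr1 (fun p : pt => pdelta p t0) Eq; rewrite /= !eqxx /=.
move=> hh; have : e = 0 by lra.
by move=> h; rewrite h ltxx in e0.
Qed.

Lemma extreme_bin (p : pt) : extreme_wrt (@pcomb R d n l) (formulation a tau II c false) p ->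
  forall i (t : 'I_(l i).-1), pdelta p t = 0 \/ pdelta p t = 1.
Proof.
move=> Hex i t; have := Hex; case=> [[H I] _].
have E := HQ_eta H; have [_ Hw Hs _] := H.
have [q0 wpos] : exists q0, 0 < pw p q0.
  case: (boolP [exists q, 0 < pw p q]) => [/existsP //|/existsPn h].
  exfalso; move: Hs; rewrite big1 => [/eqP|q _]; first by rewrite eq_sym oner_eq0.
  by apply/eqP; rewrite eq_le Hw andbT leNgt h.
have w1 := ext_point Hex wpos.
have wz : forall q, q != q0 -> pw p q = 0.
  move=> q hq; have : \sum_(q | q != q0) pw p q = 0.
    move: Hs; rewrite (bigD1 q0) //= w1; lra.
  by move/(psumr_eq0P (fun q _ => Hw q)); apply.
have ZT : forall k, (k <= n)%N -> Zs a p i k = (k <= q0 i)%N%:R.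
  move=> k kn; rewrite [in LHS]E Zs_mk // /Tw (bigD1 q0) //= w1 mulr1 big1 ?addr0 //.
  by move=> q /wz ->; rewrite mulr0.
have tn := tau_ord t.
have [_ _ I3 I4] := I; have [h1 h2] := I3 i t.
rewrite !ZT // in h1 h2; last exact: ltnW.
have d01 := I4 i t.
case: (ltngtP (q0 i) (tau i t.+1)) => h.
- left; apply/eqP; rewrite eq_le; move: h1 h2; rewrite leqNgt h leqNgt ltnS ltnW //=.
  by rewrite /= ?mulr0n => -> _; case/andP: d01 => ->.
- right; apply/eqP; rewrite eq_le; move: h1 h2; rewrite (ltnW h) h /= ?mulr1n => -> ->.
  by [].
- apply: perturb => //; rewrite ZT ?h ?leqnn ?ltnn //; exact: ltnW.
Qed.

Lemma main m (X : ('I_m -> R) -> Prop) (f : ('I_m -> R) -> 'I_d -> R)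
  (u : ('I_m -> R) -> 'I_d -> 'I_n.+1 -> R)
  (W : ('I_m -> R) -> ('I_d -> R) -> Prop) :
  (forall x, X x -> forall i, a i 0%N <= f x i <= a i n) ->
  convex_wrt (@vcomb R m) X ->
  (forall (i : 'I_d) (j : 'I_n.+1) x y t, X x -> X y -> 0 <= t <= 1 ->
     u (vcomb t x y) i j <= t * u x i j + (1 - t) * u y i j) ->
  (forall x i, X x -> u x i ord0 = a i 0%N) ->
  (forall x i, X x -> u x i ord_max = f x i) ->
  (forall x (i : 'I_d) (j : 'I_n.+1), X x -> (1 <= j <= n.-1)%N ->
     u x i j <= Num.min (f x i) (a i j)) ->
  convex_wrt (fun t (p q : ('I_m -> R) * ('I_d -> R)) => (vcomb t p.1 q.1, vcomb t p.2 q.2))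
    (fun p => W p.1 p.2) ->
  (forall x, X x -> W x (f x)) ->
  ideal_formulation (formulation (n := n) (l := l) a tau II c) (target l a tau II c) /\
  MICP_relaxation (ext_formulation (n := n) (l := l) a tau II c X u W) X (fun x => phi II c (f x)).
Proof.
move=> fX Xc uc u0 un um Wc Wf; split.
  split.
    move=> y; split; first exact: target_form.
    by case=> p [Fp <-]; apply: form_target.
  by move=> p Hp i t; apply: extreme_bin.
split.
  move=> x Xx.
  have H : forall i, exists k, (k < n)%N && (a i k <= f x i <= a i k.+1).
    move=> i; have [k [_ k2 k3]] := find_seg n1 (leqnn n) (fX x Xx i).
    by exists k; rewrite k2 k3.
  pose j i := xchoose (H i).
  have jP : forall i, _ := fun i => xchooseP (H i).
  have jn : forall i, (j i < n)%N by move=> i; have /andP [] := jP i.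
  have fj : forall i, a i (j i) <= f x i <= a i (j i).+1.
    by move=> i; have /andP [] := jP i.
  have Ef : slast (pc (f x) j) = f x.
    by apply: functional_extensionality => i; rewrite pc_slast.
  exists (pc (f x) j); split; last exact: pc_mu.
  split => //=; first exact: pc_form.
    move=> i k; have E : ps (pc (f x) j) i k = (if (k <= j i)%N then a i k else f x i) by apply: pc_ps.
    move: E => /= ->.
    case: (eqVneq (val k) 0%N) => k0.
      have -> : k = ord0 by apply: val_inj.
      by rewrite u0 //= leq0n.
    case: (eqVneq (val k) n) => kn.
      have -> : k = ord_max by apply: val_inj.
      by rewrite un //= leqNgt jn.
    have k1 : (1 <= k <= n.-1)%N.
      rewrite lt0n k0 /= -ltnS prednK //.
      by rewrite ltn_neqAle kn /= -ltnS ltn_ord.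
    have := um x i k Xx k1; rewrite le_min => /andP [h1 h2].
    by case: ifP.
  by rewrite Ef; apply: Wf.
case=> [x1 p1] [x2 p2] t [/= X1 F1 U1 W1] [/= X2 F2 U2 W2] t01; split => /=.
- exact: Xc.
- by apply: form_comb.
- move=> i k; apply: le_trans (uc i k x1 x2 t X1 X2 t01) _.
  case/andP: t01 => t0 t1.
  by apply: lerD; apply: ler_wpM2l => //; rewrite subr_ge0.
- exact: (Wc (x1, slast p1) (x2, slast p2) t W1 W2 t01).
Qed.
End S.

Unset Implicit Arguments.

Theorem corollary4p7 (R : realType) (d n m : nat)
  (a : 'I_d -> nat -> R) (l : 'I_d -> nat) (tau : 'I_d -> nat -> nat)
  (II : {set {set 'I_d}}) (c : {set 'I_d} -> R)
  (X : ('I_m -> R) -> Prop) (f : ('I_m -> R) -> 'I_d -> R)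
  (u : ('I_m -> R) -> 'I_d -> 'I_n.+1 -> R)
  (W : ('I_m -> R) -> ('I_d -> R) -> Prop) :
  (1 <= d)%N -> (1 <= n)%N ->
  (forall (i : 'I_d) (j : nat), (j < n)%N -> a i j < a i j.+1) ->
  (forall i : 'I_d, tau i 0%N = 0%N) ->
  (forall (i : 'I_d) (t : nat), (t < l i)%N -> (tau i t < tau i t.+1)%N) ->
  (forall i : 'I_d, tau i (l i) = n) ->
  (* hypotheses of the second part *)
  (forall x, X x -> forall i, a i 0%N <= f x i <= a i n) ->
  convex_wrt (@vcomb R m) X ->
  (forall (i : 'I_d) (j : 'I_n.+1) x y t, X x -> X y -> 0 <= t <= 1 ->
     u (vcomb t x y) i j <= t * u x i j + (1 - t) * u y i j) ->
  (forall x i, X x -> u x i ord0 = a i 0%N) ->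
  (forall x i, X x -> u x i ord_max = f x i) ->
  (forall x (i : 'I_d) (j : 'I_n.+1), X x -> (1 <= j <= n.-1)%N ->
     u x i j <= Num.min (f x i) (a i j)) ->
  convex_wrt (fun t (p q : ('I_m -> R) * ('I_d -> R)) => (vcomb t p.1 q.1, vcomb t p.2 q.2))
    (fun p => W p.1 p.2) ->
  (forall x, X x -> W x (f x)) ->
  ideal_formulation (formulation (n := n) (l := l) a tau II c) (target l a tau II c) /\
  MICP_relaxation (ext_formulation (n := n) (l := l) a tau II c X u W) X (fun x => phi II c (f x)).
Proof.
move=> _ n1 amono tau0 taumono taul.
exact: main.
Qed.
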